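(* Let $f,g:\mathbb{C}\to\mathbb{C}$ be entire functions with $f\circ g=g\circ f$, and suppose that $f$ and $g$ satisfy Property A. Then the escaping set $I(f)$ is completely invariant under $g$, and the escaping set $I(g)$ is completely invariant under $f$.
   Context: For an entire function $h$, $h^n$ denotes the $n$-th iterate. The escaping set is $I(h)=\{z\in\mathbb{C}: h^n(z)\to\infty \text{ as } n\to\infty\}$. A set $A\subseteq\mathbb{C}$ is completely invariant under a map $\phi$ if $\phi(A)\subseteq A$ and $\phi^{-1}(A)\subseteq A$. Property A for the pair $(f,g)$: for every $z\in\mathbb{C}$ and every strictly increasing sequence $(n_k)$ of natural numbers with $|f^{n_k}(z)|\to\infty$, one has $|g(f^{n_k}(z))|\to\infty$; and symmetrically, for every $z\in\mathbb{C}$ and every strictly increasing $(n_k)$ with $|g^{n_k}(z)|\to\infty$, one has $|f(g^{n_k}(z))|\to\infty$. (Informally: each of $f,g$ sends points of orbits escaping under the other function to $\infty$.) *)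

(* Defs.v *)
From Stdlib Require Import Reals.
From Coquelicot Require Import Coquelicot.

(* Entire function: complex-differentiable at every point of C
   (derivative taken over the absolute ring C, i.e. holomorphic). *)
Definition entire (h : C -> C) : Prop :=
  forall z : C, @ex_derive C_AbsRing C_NormedModule h z.

Fixpoint iter_fn (n : nat) (h : C -> C) (z : C) : C :=
  match n with
  | O => z
  | S m => h (iter_fn m h z)
  end.

Definition tends_to_infty (u : nat -> C) : Prop :=
  is_lim_seq (fun k => Cmod (u k)) p_infty.

Definition escaping_set (h : C -> C) (z : C) : Prop :=
  tends_to_infty (fun n => iter_fn n h z).

Definition completely_invariant (A : C -> Prop) (phi : C -> C) : Prop :=
  (forall z, A z -> A (phi z)) /\ (forall z, A (phi z) -> A z).

Definition strictly_increasing (nk : nat -> nat) : Prop :=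
  forall k, (nk k < nk (S k))%nat.

Definition property_A (f g : C -> C) : Prop :=
  (forall (z : C) (nk : nat -> nat), strictly_increasing nk ->
     tends_to_infty (fun k => iter_fn (nk k) f z) ->
     tends_to_infty (fun k => g (iter_fn (nk k) f z)))
  /\
  (forall (z : C) (nk : nat -> nat), strictly_increasing nk ->
     tends_to_infty (fun k => iter_fn (nk k) g z) ->
     tends_to_infty (fun k => f (iter_fn (nk k) g z))).

(* Main.v *)
Require Import Defs.
From Stdlib Require Import Reals Lra Lia Classical ClassicalEpsilon.
From Coquelicot Require Import Coquelicot.
Open Scope R_scope.

Lemma Cmod_le_comp (p : C) : Cmod p <= sqrt 2 * Rmax (Rabs (fst p)) (Rabs (snd p)).
Proof. apply Cmod_2Rmax. Qed.

Lemma sqrt2_lt2 : sqrt 2 < 2.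
Proof. pose proof (sqrt_pos 2). pose proof (sqrt_sqrt 2). nra. Qed.

Lemma Cmod_tri3 (a b : C) : Cmod a <= Cmod (a - b) + Cmod b.
Proof.
  replace a with ((a - b) + b)%C at 1 by ring. apply Cmod_triangle.
Qed.

Lemma comp_le (p : C) : Rabs (fst p) <= Cmod p /\ Rabs (snd p) <= Cmod p.
Proof.
  pose proof (Rmax_Cmod p). split.
  - eapply Rle_trans; [apply Rmax_l|exact H].
  - eapply Rle_trans; [apply Rmax_r|exact H].
Qed.

Lemma cont_C (g : C -> C) : (forall z, @ex_derive C_AbsRing C_NormedModule g z) ->
  forall x (eps : posreal), exists delta : posreal, forall y, Cmod (y - x) < delta -> Cmod (g y - g x) < eps.
Proof.
  intros Hg x eps.
  pose proof (ex_derive_continuous g x (Hg x)) as Hc.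
  assert (H1 : locally (g x) (ball_norm (g x) eps)).
  { exact (locally_le_locally_norm (K:=C_AbsRing) (V:=C_NormedModule) (g x) _ (locally_norm_ball_norm _ eps)). }
  specialize (Hc _ H1).
  destruct Hc as [d Hd]. exists d. intros y Hy.
  specialize (Hd y). unfold ball_norm in Hd. simpl in Hd.
  apply Hd. exact Hy. Qed.

Section B.
Variable g : C -> C.
Hypothesis Hc : forall x (eps : posreal), exists delta : posreal,
  forall y, Cmod (y - x) < delta -> Cmod (g y - g x) < eps.

Definition half : posreal := mkposreal (1/2) ltac:(lra).

Definition dl (u v : R) : posreal :=
  proj1_sig (constructive_indefinite_description _ (Hc (u, v) half)).

Lemma dl_spec u v y : Cmod (y - (u, v)) < dl u v -> Cmod (g y - g (u, v)) < 1/2.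
Proof.
  unfold dl. destruct (constructive_indefinite_description _ _) as [d Hd]. simpl. apply Hd.
Qed.

Definition delta (u v : R) : posreal := pos_div_2 (pos_div_2 (dl u v)).

Lemma unif M : exists d : posreal, forall p p' : C,
  Rabs (fst p) <= M -> Rabs (snd p) <= M ->
  Rabs (fst p' - fst p) < d -> Rabs (snd p' - snd p) < d ->
  Cmod (g p' - g p) < 1.
Proof.
  destruct (compactness_value_2d (-M) M (-M) M delta) as [d Hd].
  exists d. intros [x y] [x' y'] H1 H2 H3 H4. simpl in *.
  apply NNPP. intro Hn.
  pose proof (Rle_abs x). pose proof (Rle_abs (-x)). pose proof (Rle_abs y). pose proof (Rle_abs (-y)).
  rewrite Rabs_Ropp in *.
  apply (Hd x y); [lra | lra |].
  intros [u [v [_ [_ [Hu [Hv Hdd]]]]]].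
  apply Hn.
  unfold delta in *. simpl in *.
  set (e := pos (dl u v)) in *.
  pose proof sqrt2_lt2. pose proof (sqrt_pos 2).
  assert (0 < e) by (unfold e; apply cond_pos).
  pose proof (Rabs_pos (x-u)). pose proof (Rabs_pos (y-v)). pose proof (Rabs_pos (x'-x)). pose proof (Rabs_pos (y'-y)).
  assert (A1 : Cmod ((x, y) - (u, v)) < dl u v).
  { eapply Rle_lt_trans. apply Cmod_le_comp. simpl.
    apply Rmax_case_strong; intros _; fold e.
    - replace (x + - u) with (x - u) by ring. nra.
    - replace (y + - v) with (y - v) by ring. nra. }
  assert (A2 : Cmod ((x', y') - (u, v)) < dl u v).
  { eapply Rle_lt_trans. apply Cmod_le_comp. simpl.
    pose proof (Rabs_triang (x' - x) (x - u)).
    pose proof (Rabs_triang (y' - y) (y - v)).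
    replace (x' - x + (x - u)) with (x' + - u) in * by ring.
    replace (y' - y + (y - v)) with (y' + - v) in * by ring.
    apply Rmax_case_strong; intros _; fold e; nra. }
  apply dl_spec in A1. apply dl_spec in A2.
  replace (g (x', y') - g (x, y))%C with ((g (x', y') - g (u, v)) - (g (x, y) - g (u, v)))%C by ring.
  eapply Rle_lt_trans. unfold Cminus at 1. apply Cmod_triangle.
  rewrite Cmod_opp. lra.
Qed.

Lemma bounded M : exists B, forall z, Cmod z <= M -> Cmod (g z) <= B.
Proof.
  destruct (unif M) as [d Hd].
  destruct (INR_unbounded (M / d)) as [n Hn].
  set (N := S n).
  assert (HN : 0 < INR N) by (unfold N; rewrite S_INR; pose proof (pos_INR n); lra).
  assert (HMN : M / INR N < d).
  { unfold N. rewrite S_INR. pose proof (cond_pos d). pose proof (pos_INR n).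
    apply (Rmult_lt_reg_r (INR n + 1)); [lra|].
    unfold Rdiv. rewrite Rmult_assoc, Rinv_l by lra.
    apply (Rmult_lt_reg_r (/ d)). apply Rinv_0_lt_compat; lra.
    replace (d * (INR n + 1) * / d) with (INR n + 1) by (field; lra).
    unfold Rdiv in Hn. lra. }
  exists (Cmod (g (0, 0)) + INR N).
  intros z Hz. destruct z as [a b].
  destruct (comp_le (a, b)) as [Ha Hb]. simpl in Ha, Hb. pose proof (Rabs_pos a). pose proof (Rabs_pos b).
  set (zk := fun k : nat => (INR k / INR N * a, INR k / INR N * b) : C).
  assert (Hk : forall k, (k <= N)%nat -> Cmod (g (zk k)) <= Cmod (g (0, 0)) + INR k).
  { induction k as [|k IH]; intros Hk.
    - unfold zk. change (INR 0) with 0. replace (0 / INR N * a) with 0 by (field; lra).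
      replace (0 / INR N * b) with 0 by (field; lra). lra.
    - assert (Hk' : (k <= N)%nat) by lia. specialize (IH Hk').
      assert (Ht : 0 <= INR k / INR N <= 1).
      { split. apply Rdiv_le_0_compat; [apply pos_INR|lra].
        apply le_INR in Hk'. apply (Rmult_le_reg_r (INR N)); [lra|].
        unfold Rdiv. rewrite Rmult_assoc, Rinv_l by lra. lra. }
      assert (Hstep : Cmod (g (zk (S k)) - g (zk k)) < 1).
      { apply Hd; unfold zk; cbn [fst snd].
        - rewrite Rabs_mult, (Rabs_pos_eq (INR k / INR N)) by lra. nra.
        - rewrite Rabs_mult, (Rabs_pos_eq (INR k / INR N)) by lra. nra.
        - rewrite S_INR. replace ((INR k + 1) / INR N * a - INR k / INR N * a) with (a / INR N) by (field; lra).
          unfold Rdiv. rewrite Rabs_mult, (Rabs_pos_eq (/ INR N)) by (left; apply Rinv_0_lt_compat; lra).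
          unfold Rdiv in HMN. pose proof (Rinv_0_lt_compat _ HN). nra.
        - rewrite S_INR. replace ((INR k + 1) / INR N * b - INR k / INR N * b) with (b / INR N) by (field; lra).
          unfold Rdiv. rewrite Rabs_mult, (Rabs_pos_eq (/ INR N)) by (left; apply Rinv_0_lt_compat; lra).
          unfold Rdiv in HMN. pose proof (Rinv_0_lt_compat _ HN). nra. }
      pose proof (Cmod_tri3 (g (zk (S k))) (g (zk k))). rewrite S_INR. lra. }
  specialize (Hk N (le_n N)). unfold zk in Hk.
  replace (INR N / INR N * a) with a in Hk by (field; lra).
  replace (INR N / INR N * b) with b in Hk by (field; lra). exact Hk.
Qed.
End B.

Lemma iter_comm (f g : C -> C) : (forall z, f (g z) = g (f z)) ->
  forall n z, iter_fn n f (g z) = g (iter_fn n f z).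
Proof. intros H n; induction n; intros z; simpl; [reflexivity|]. rewrite IHn. apply H. Qed.

Lemma part1 (f g : C -> C) : (forall z, f (g z) = g (f z)) ->
  (forall z nk, strictly_increasing nk -> tends_to_infty (fun k => iter_fn (nk k) f z) ->
     tends_to_infty (fun k => g (iter_fn (nk k) f z))) ->
  (forall z, @ex_derive C_AbsRing C_NormedModule g z) ->
  completely_invariant (escaping_set f) g.
Proof.
  intros Hfg HA Hg. split; intros z Hz; unfold escaping_set, tends_to_infty in *.
  - eapply is_lim_seq_ext.
    + intros n. rewrite (iter_comm f g Hfg). reflexivity.
    + apply (HA z (fun k => k)). intros k; simpl; lia. exact Hz.
  - assert (Hz' : is_lim_seq (fun n => Cmod (g (iter_fn n f z))) p_infty).
    { eapply is_lim_seq_ext; [|exact Hz]. intros n. simpl. rewrite (iter_comm f g Hfg). reflexivity. }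
    apply is_lim_seq_p_infty_Reals in Hz'. apply is_lim_seq_p_infty_Reals.
    intros M. destruct (bounded g (cont_C g Hg) M) as [B HB].
    destruct (Hz' B) as [N HN]. exists N. intros n Hn.
    specialize (HN n Hn). destruct (Rle_lt_dec (Cmod (iter_fn n f z)) M) as [Hle|Hlt]; [|exact Hlt].
    apply HB in Hle. lra.
Qed.

Theorem mainTheorem1 (f g : C -> C) :
  entire f -> entire g ->
  (forall z : C, f (g z) = g (f z)) ->
  property_A f g ->
  completely_invariant (escaping_set f) g /\
  completely_invariant (escaping_set g) f.
Proof.
  intros Hf Hg Hfg [HA1 HA2]. split.
  - apply part1; auto.
  - apply part1; auto.
Qed.
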